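(* For every $\varepsilon\in(0,1]$ and $n\in\mathbb N$, \[ |\alpha(n,0)|\le\frac{\varepsilon^{-1}+4\sqrt2}{\pi}\cdot\frac{4+\varepsilon}{\varepsilon}\cdot\frac1N\Big(\frac N{N-\varepsilon}\Big)^{\max\{n-1,0\}},\qquad |\alpha(n,1)|\le\frac9\pi\cdot\frac{4+\varepsilon}{\varepsilon}\cdot\frac1N\Big(\frac N{N-\varepsilon}\Big)^{\max\{n-1,0\}}, \] \[ \sup_{q\in[-1,1]}\Big|\sum_{s=2}^\infty q^s\alpha(n,s)\Big|\le\frac1\pi\Big(\varepsilon^{-1}+\frac{16\sqrt2}{(1-\cos1)^{1/2}}\Big)\cdot\frac{4+\varepsilon}{\varepsilon}\cdot\frac1N\Big(\frac N{N-\varepsilon}\Big)^{\max\{n-2,0\}}. \]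
   Context: $E$ is a finite set with $N=\#E>8$ elements; $Q$ is an irreducible stochastic matrix on $E$ with $Q(x,y)=Q(y,x)$ for all $x,y$ and $\mathrm{tr}(Q)=0$. The function $\alpha:\mathbb Z_+\times\mathbb Z_+\to\mathbb R$ is defined by $\alpha(0,s)=0$ for all $s$ and, for $n\in\mathbb Z_+$, $\alpha(n+1,0)=\frac2{N^2}+\alpha(n,0)+\frac2{N^2}\sum_{s\ge1}\alpha(n,s)\mathrm{tr}(Q^s)$, $\alpha(n+1,1)=-\frac2{N^2}+\frac{N-2}N\alpha(n,1)-\frac2{N^2}\sum_{s\ge1}\alpha(n,s)\mathrm{tr}(Q^s)$, $\alpha(n+1,s)=\frac{N-2}N\alpha(n,s)+\frac2N\alpha(n,s-1)$ for $s\ge2$. *)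

(* Defs.v *)
From Stdlib Require Import Reals Lra Lia.
Open Scope R_scope.

Fixpoint rsum (n : nat) (f : nat -> R) : R :=
  match n with
  | O => 0
  | S k => rsum k f + f k
  end.

(* The finite set E is identified with {0,...,N-1}; a matrix on E is a
   function nat -> nat -> R of which only entries with indices < N matter. *)

Fixpoint mpow (N : nat) (Q : nat -> nat -> R) (s : nat) : nat -> nat -> R :=
  match s with
  | O => fun i j => if Nat.eq_dec i j then 1 else 0
  | S k => fun i j => rsum N (fun l => mpow N Q k i l * Q l j)
  end.

Definition mtrace (N : nat) (M : nat -> nat -> R) : R := rsum N (fun i => M i i).

Definition stochastic (N : nat) (Q : nat -> nat -> R) : Prop :=
  (forall i j, (i < N)%nat -> (j < N)%nat -> 0 <= Q i j) /\
  (forall i, (i < N)%nat -> rsum N (fun j => Q i j) = 1).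

Definition symmetric (N : nat) (Q : nat -> nat -> R) : Prop :=
  forall i j, (i < N)%nat -> (j < N)%nat -> Q i j = Q j i.

Definition irreducible (N : nat) (Q : nat -> nat -> R) : Prop :=
  forall i j, (i < N)%nat -> (j < N)%nat -> exists s, 0 < mpow N Q s i j.

(* alpha N Q n s = alpha(n,s).  Since alpha(m,s) = 0 for s > m (immediate
   induction from the recursion), the series sum_{s>=1} alpha(m,s) tr(Q^s)
   is the finite sum over s = 1..m. *)
Fixpoint alpha (N : nat) (Q : nat -> nat -> R) (n : nat) : nat -> R :=
  match n with
  | O => fun _ => 0
  | S m =>
      let a := alpha N Q m in
      let NR := INR N in
      let Sm := rsum m (fun k => a (S k) * mtrace N (mpow N Q (S k))) in
      fun s =>
        match s with
        | O => 2 / NR ^ 2 + a O + 2 / NR ^ 2 * Sm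
        | S O => - (2 / NR ^ 2) + (NR - 2) / NR * a 1%nat - 2 / NR ^ 2 * Sm
        | S (S _ as s') => (NR - 2) / NR * a s + 2 / NR * a s'
        end
  end.

(* sum_{s >= 2} q^s alpha(n,s): alpha(n,s) = 0 for s > n, so this is the
   finite sum over s = 2..n. *)
Definition alpha_tail (N : nat) (Q : nat -> nat -> R) (n : nat) (q : R) : R :=
  rsum (n - 1) (fun k => q ^ (k + 2) * alpha N Q n (k + 2)).

(* Main.v *)
Require Import Defs.
From Stdlib Require Import Reals Lra Lia FunctionalExtensionality.
Open Scope R_scope.

Lemma rsum_ext n f g : (forall k, (k < n)%nat -> f k = g k) -> rsum n f = rsum n g.
Proof. induction n; simpl; intros H; [reflexivity|]. rewrite IHn by (intros; apply H; lia). rewrite H by lia. reflexivity. Qed.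

Lemma rsum_plus n f g : rsum n (fun k => f k + g k) = rsum n f + rsum n g.
Proof. induction n; simpl; [lra|]. rewrite IHn. lra. Qed.

Lemma rsum_scal n c f : rsum n (fun k => c * f k) = c * rsum n f.
Proof. induction n; simpl; [lra|]. rewrite IHn. lra. Qed.

Lemma rsum_scal_r n c f : rsum n (fun k => f k * c) = rsum n f * c.
Proof. induction n; simpl; [lra|]. rewrite IHn. lra. Qed.

Lemma rsum_minus n f g : rsum n (fun k => f k - g k) = rsum n f - rsum n g.
Proof. induction n; simpl; [lra|]. rewrite IHn. lra. Qed.

Lemma rsum_le n f g : (forall k, (k < n)%nat -> f k <= g k) -> rsum n f <= rsum n g.
Proof. induction n; simpl; intros H; [lra|]. assert (H1 := H n ltac:(lia)).
  assert (rsum n f <= rsum n g) by (apply IHn; intros; apply H; lia). lra. Qed.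

Lemma rsum_nonneg n f : (forall k, (k < n)%nat -> 0 <= f k) -> 0 <= rsum n f.
Proof. intros H. replace 0 with (rsum n (fun _ => 0)). apply rsum_le; auto.
  induction n; simpl; [auto|]. rewrite IHn; [lra|]. intros; apply H; lia. Qed.

Lemma rsum_zero n f : (forall k, (k < n)%nat -> f k = 0) -> rsum n f = 0.
Proof. induction n; simpl; intros H; [auto|]. rewrite IHn by (intros; apply H; lia). rewrite H by lia. lra. Qed.

Lemma rsum_abs n f : Rabs (rsum n f) <= rsum n (fun k => Rabs (f k)).
Proof. induction n; simpl. rewrite Rabs_R0; lra.
  eapply Rle_trans. apply Rabs_triang. lra. Qed.

Lemma rsum_shift n f : rsum (S n) f = f O + rsum n (fun k => f (S k)).
Proof. induction n. simpl. lra. change (rsum (S (S n)) f) with (rsum (S n) f + f (S n)).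
  rewrite IHn. simpl. lra. Qed.

Lemma rsum_exch n m f : rsum n (fun i => rsum m (fun j => f i j)) = rsum m (fun j => rsum n (fun i => f i j)).
Proof. induction n; simpl. symmetry. apply rsum_zero. auto.
  rewrite IHn. rewrite <- rsum_plus. reflexivity. Qed.

Lemma rsum_ge_term n f k : (forall j, (j < n)%nat -> 0 <= f j) -> (k < n)%nat -> f k <= rsum n f.
Proof. induction n; intros H Hk; [lia|]. simpl.
  destruct (Nat.eq_dec k n). subst. assert (0 <= rsum n f) by (apply rsum_nonneg; intros; apply H; lia). lra.
  assert (f k <= rsum n f) by (apply IHn; [intros; apply H; lia | lia]). assert (0 <= f n) by (apply H; lia). lra. Qed.

Lemma rsum_const n c : rsum n (fun _ => c) = INR n * c.
Proof. induction n; simpl rsum. simpl; lra. rewrite IHn, S_INR. lra. Qed.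

Definition idm (i j : nat) : R := if Nat.eq_dec i j then 1 else 0.

Lemma delta_r n f i : (i < n)%nat -> rsum n (fun l => f l * idm l i) = f i.
Proof. induction n; intros Hi; [lia|]. simpl. unfold idm at 2.
  destruct (Nat.eq_dec n i).
  - subst. rewrite rsum_zero. lra. intros k Hk. unfold idm. destruct (Nat.eq_dec k i); [lia|lra].
  - rewrite IHn by lia. lra. Qed.

Lemma delta_l n f i : (i < n)%nat -> rsum n (fun l => idm i l * f l) = f i.
Proof. intros Hi. rewrite <- (delta_r n f i Hi). apply rsum_ext. intros k _. unfold idm.
  destruct (Nat.eq_dec i k), (Nat.eq_dec k i); subst; try lia; lra. Qed.
Definition mmul (N : nat) (X Y : nat -> nat -> R) : nat -> nat -> R :=
  fun i j => rsum N (fun l => X i l * Y l j).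

Lemma mmul_assoc N X Y Z i j : mmul N (mmul N X Y) Z i j = mmul N X (mmul N Y Z) i j.
Proof. unfold mmul.
  transitivity (rsum N (fun l => rsum N (fun k => X i k * Y k l * Z l j))).
  apply rsum_ext; intros. rewrite <- rsum_scal_r. reflexivity.
  rewrite rsum_exch. apply rsum_ext; intros. rewrite <- rsum_scal. apply rsum_ext; intros. ring. Qed.

Lemma mpow_S N M k i j : mpow N M (S k) i j = mmul N (mpow N M k) M i j.
Proof. reflexivity. Qed.

Lemma mpow_0 N M i j : mpow N M 0 i j = idm i j.
Proof. reflexivity. Qed.

Lemma mpow_add N M a b i j : (i < N)%nat -> (j < N)%nat ->
  mpow N M (a + b) i j = mmul N (mpow N M a) (mpow N M b) i j.
Proof. revert i j. induction b; intros i j Hi Hj.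
  - rewrite Nat.add_0_r. unfold mmul.
    change (mpow N M a i j = rsum N (fun l => mpow N M a i l * idm l j)). rewrite delta_r; auto.
  - rewrite Nat.add_succ_r, mpow_S. unfold mmul at 1.
    rewrite (rsum_ext _ _ (fun l => mmul N (mpow N M a) (mpow N M b) i l * M l j)).
    2:{ intros. rewrite IHb; auto. }
    change (mmul N (mmul N (mpow N M a) (mpow N M b)) M i j = mmul N (mpow N M a) (mpow N M (S b)) i j).
    rewrite mmul_assoc. reflexivity. Qed.

Lemma mpow_1 N M i j : (i < N)%nat -> mpow N M 1 i j = M i j.
Proof. intros. rewrite mpow_S. unfold mmul. apply (delta_l N (fun l => M l j)). auto. Qed.

Lemma mpow_Sl N M k i j : (i < N)%nat -> (j < N)%nat ->
  mpow N M (S k) i j = mmul N M (mpow N M k) i j.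
Proof. intros. change (S k) with (1 + k)%nat. rewrite mpow_add by auto.
  unfold mmul. apply rsum_ext; intros. rewrite mpow_1; auto. Qed.

Definition msym N (M : nat -> nat -> R) := forall i j, (i < N)%nat -> (j < N)%nat -> M i j = M j i.

Lemma idm_sym i j : idm i j = idm j i.
Proof. unfold idm. destruct (Nat.eq_dec i j), (Nat.eq_dec j i); subst; try lia; lra. Qed.

Lemma mpow_sym N M k : msym N M -> msym N (mpow N M k).
Proof. intros HM. induction k; intros i j Hi Hj.
  - rewrite !mpow_0. apply idm_sym.
  - rewrite mpow_S, (mpow_Sl N M k j i) by auto. unfold mmul. apply rsum_ext; intros.
    rewrite IHk, HM by auto. ring. Qed.

Lemma mpow_nonneg N M k : (forall i j, (i < N)%nat -> (j < N)%nat -> 0 <= M i j) ->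
  forall i j, (i < N)%nat -> (j < N)%nat -> 0 <= mpow N M k i j.
Proof. intros HM. induction k; intros i j Hi Hj.
  - rewrite mpow_0. unfold idm. destruct (Nat.eq_dec i j); lra.
  - rewrite mpow_S. unfold mmul. apply rsum_nonneg. intros. apply Rmult_le_pos; auto. Qed.
Fixpoint Phi (rho aa : R) (m : nat) (w : nat -> R) : R :=
  match m with
  | O => w O
  | S m' => rho * Phi rho aa m' w + aa * Phi rho aa m' (fun s => w (S s))
  end.

Lemma Phi_nonneg rho aa m : 0 <= rho -> 0 <= aa -> forall w, (forall s, 0 <= w s) -> 0 <= Phi rho aa m w.
Proof. intros Hr Ha. induction m; intros w Hw; simpl; auto.
  assert (0 <= Phi rho aa m w) by auto. assert (0 <= Phi rho aa m (fun s => w (S s))) by auto.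
  apply Rplus_le_le_0_compat; apply Rmult_le_pos; auto. Qed.

Lemma Phi_lin rho aa m n : forall W, Phi rho aa m (fun s => rsum n (fun i => W i s)) = rsum n (fun i => Phi rho aa m (W i)).
Proof. induction m; intros W; simpl; auto.
  rewrite (IHm W). rewrite (IHm (fun i s => W i (S s))).
  rewrite <- !rsum_scal, <- rsum_plus. reflexivity. Qed.

Lemma Phi_ext rho aa m w1 w2 : (forall s, w1 s = w2 s) -> Phi rho aa m w1 = Phi rho aa m w2.
Proof. intros H. replace w1 with w2; auto. apply functional_extensionality; auto. Qed.

Definition Pm (rho aa : R) (Q : nat -> nat -> R) : nat -> nat -> R := fun i j => rho * idm i j + aa * Q i j.

Lemma Phi_mat N Q rho aa m : forall Y i j, (i < N)%nat -> (j < N)%nat ->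
  Phi rho aa m (fun s => mmul N Y (mpow N Q s) i j) = mmul N Y (mpow N (Pm rho aa Q) m) i j.
Proof. induction m; intros Y i j Hi Hj.
  - reflexivity.
  - simpl Phi. rewrite (IHm Y i j Hi Hj).
    rewrite (Phi_ext _ _ _ _ (fun s => mmul N (mmul N Y Q) (mpow N Q s) i j)).
    2:{ intros s. rewrite mmul_assoc. unfold mmul. apply rsum_ext; intros l Hl. f_equal.
        change (mpow N Q (S s) l j = mmul N Q (mpow N Q s) l j). apply mpow_Sl; auto. }
    rewrite IHm by auto.
    transitivity (mmul N (mmul N Y (Pm rho aa Q)) (mpow N (Pm rho aa Q) m) i j).
    + symmetry. transitivity (rsum N (fun l => rho * (Y i l * mpow N (Pm rho aa Q) m l j)
          + aa * (mmul N Y Q i l * mpow N (Pm rho aa Q) m l j))).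
      * apply rsum_ext. intros l Hl. unfold Pm. unfold mmul at 1.
        rewrite (rsum_ext _ _ (fun k => rho * (Y i k * idm k l) + aa * (Y i k * Q k l))) by (intros; ring).
        rewrite rsum_plus, !rsum_scal, delta_r by auto. unfold mmul. ring.
      * rewrite rsum_plus, !rsum_scal. reflexivity.
    + rewrite mmul_assoc. unfold mmul at 1 3. apply rsum_ext; intros l Hl.
      f_equal. symmetry. apply mpow_Sl; auto. Qed.
Definition Bf N M X Y := mtrace N (mmul N X (mmul N M Y)).
Definition qf N (M : nat -> nat -> R) (x : nat -> R) := rsum N (fun j => x j * rsum N (fun l => M j l * x l)).
Definition nrm N (x : nat -> R) := rsum N (fun j => x j * x j).
Definition madd (X : nat -> nat -> R) t Y := fun i j : nat => X i j + t * Y i j.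

Lemma nrm_nonneg N x : 0 <= nrm N x.
Proof. apply rsum_nonneg. intros. nra. Qed.

Lemma Bf_diag N M X : msym N X -> Bf N M X X = rsum N (fun i => qf N M (X i)).
Proof. intros HX. unfold Bf, mtrace, mmul, qf. apply rsum_ext; intros i Hi. apply rsum_ext; intros j Hj.
  f_equal. apply rsum_ext; intros l Hl. rewrite (HX l i) by auto. reflexivity. Qed.

Lemma qf_idm N x : qf N idm x = nrm N x.
Proof. unfold qf, nrm. apply rsum_ext; intros j Hj. rewrite delta_l; auto. Qed.

Lemma qf_P N Q rho aa x : qf N (Pm rho aa Q) x = rho * nrm N x + aa * qf N Q x.
Proof. unfold qf, nrm, Pm. rewrite <- !rsum_scal, <- rsum_plus. apply rsum_ext; intros j Hj.
  rewrite (rsum_ext _ _ (fun l => rho * (idm j l * x l) + aa * (Q j l * x l))) by (intros; ring).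
  rewrite rsum_plus, !rsum_scal, delta_l by auto. ring. Qed.

Lemma qf_Q_aux N Q x sg : stochastic N Q -> symmetric N Q -> sg * sg = 1 ->
  0 <= 2 * nrm N x + 2 * sg * qf N Q x.
Proof. intros [Hpos Hrow] Hsym Hsg.
  assert (H0 : 0 <= rsum N (fun j => rsum N (fun l => Q j l * ((x j + sg * x l) * (x j + sg * x l))))).
  { apply rsum_nonneg; intros; apply rsum_nonneg; intros. apply Rmult_le_pos. apply Hpos; auto. apply Rle_0_sqr. }
  rewrite (rsum_ext _ _ (fun j => rsum N (fun l => x j * x j * Q j l) + (2 * sg) * (x j * rsum N (fun l => Q j l * x l))
      + rsum N (fun l => Q j l * (x l * x l)))) in H0.
  2:{ intros j Hj. rewrite <- rsum_scal, <- rsum_scal, <- !rsum_plus. apply rsum_ext; intros l Hl.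
      replace (Q j l * ((x j + sg * x l) * (x j + sg * x l))) with
        (x j * x j * Q j l + 2 * sg * (x j * (Q j l * x l)) + (sg * sg) * (Q j l * (x l * x l))) by ring.
      rewrite Hsg. ring. }
  rewrite !rsum_plus in H0. rewrite rsum_scal in H0.
  rewrite (rsum_ext _ _ (fun j => x j * x j)) in H0.
  2:{ intros j Hj. rewrite rsum_scal, Hrow by auto. ring. }
  rewrite (rsum_exch N N (fun j l => Q j l * (x l * x l))) in H0.
  rewrite (rsum_ext _ (fun l => rsum N (fun j => Q j l * (x l * x l))) (fun l => x l * x l)) in H0.
  2:{ intros l Hl. rewrite rsum_scal_r. rewrite (rsum_ext _ _ (fun j => Q l j)). rewrite Hrow by auto. ring.
      intros; apply Hsym; auto. }
  unfold nrm, qf. lra. Qed.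

Lemma qf_Q_bound N Q x : stochastic N Q -> symmetric N Q -> - nrm N x <= qf N Q x <= nrm N x.
Proof. intros H1 H2. pose proof (qf_Q_aux N Q x 1 H1 H2 ltac:(ring)).
  pose proof (qf_Q_aux N Q x (-1) H1 H2 ltac:(ring)). lra. Qed.

Lemma Bf_addl N M X t Y Z : Bf N M (madd X t Y) Z = Bf N M X Z + t * Bf N M Y Z.
Proof. unfold Bf, mtrace, mmul, madd. rewrite <- rsum_scal, <- rsum_plus. apply rsum_ext; intros.
  rewrite <- rsum_scal, <- rsum_plus. apply rsum_ext; intros. ring. Qed.

Lemma Bf_addr N M X t Y Z : Bf N M Z (madd X t Y) = Bf N M Z X + t * Bf N M Z Y.
Proof. unfold Bf, mtrace, mmul, madd. rewrite <- rsum_scal, <- rsum_plus. apply rsum_ext; intros.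
  rewrite <- rsum_scal, <- rsum_plus. apply rsum_ext; intros.
  rewrite (rsum_ext _ _ (fun l => M k0 l * X l k + t * (M k0 l * Y l k))) by (intros; ring).
  rewrite rsum_plus, rsum_scal. ring. Qed.

Lemma Bf_symm N M X Y : msym N M -> msym N X -> msym N Y -> Bf N M X Y = Bf N M Y X.
Proof. intros HM HX HY. unfold Bf, mtrace.
  rewrite (rsum_ext _ (fun i => mmul N X (mmul N M Y) i i) (fun i => mmul N (mmul N X M) Y i i))
    by (intros; rewrite mmul_assoc; auto).
  rewrite (rsum_ext _ (fun i => mmul N Y (mmul N M X) i i) (fun i => mmul N (mmul N Y M) X i i))
    by (intros; rewrite mmul_assoc; auto).
  unfold mmul. apply rsum_ext; intros i Hi.
  rewrite (rsum_ext _ _ (fun b => rsum N (fun l => X i l * M l b * Y b i))) by (intros; rewrite rsum_scal_r; auto).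
  rewrite (rsum_ext _ (fun b => rsum N (fun l => Y i l * M l b) * X b i) (fun b => rsum N (fun l => Y i l * M l b * X b i)))
    by (intros; rewrite rsum_scal_r; auto).
  rewrite rsum_exch. apply rsum_ext; intros b Hb. apply rsum_ext; intros l Hl.
  rewrite (HX i b), (HY i l), (HM b l) by auto. ring. Qed.

Lemma msym_madd N X t Y : msym N X -> msym N Y -> msym N (madd X t Y).
Proof. intros HX HY i j Hi Hj. unfold madd. rewrite HX, HY by auto. auto. Qed.

Lemma CS_scalar A B C : 0 <= C -> (forall t, 0 <= A + 2 * t * B + t * t * C) -> B * B <= A * C.
Proof. intros HC H. destruct (Rtotal_order C 0) as [Hc|[Hc|Hc]].
  - lra.
  - subst. destruct (Req_dec B 0). subst. pose proof (H 0). nra.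
    pose proof (H (-(Rabs A + 1) / (2 * B))). replace (2 * (- (Rabs A + 1) / (2 * B)) * B) with (- (Rabs A + 1)) in H1 by (field; auto).
    assert (A <= Rabs A) by apply RRle_abs. nra.
  - pose proof (H (- B / C)). replace (A + 2 * (- B / C) * B + - B / C * (- B / C) * C) with (A - B * B / C) in H0 by (field; lra).
    assert (B * B / C <= A) by lra. apply (Rmult_le_compat_r C) in H1; [|lra].
    replace (B * B / C * C) with (B * B) in H1 by (field; lra). lra. Qed.

Lemma Bf_CS N M X Y : msym N M -> (forall Z, msym N Z -> 0 <= Bf N M Z Z) -> msym N X -> msym N Y ->
  Bf N M X Y * Bf N M X Y <= Bf N M X X * Bf N M Y Y.
Proof. intros HM Hpsd HX HY. apply CS_scalar. apply Hpsd; auto. intros t.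
  pose proof (Hpsd (madd X t Y) (msym_madd N X t Y HX HY)).
  rewrite Bf_addl, !Bf_addr in H. rewrite (Bf_symm N M Y X) in H by auto. lra. Qed.
Lemma P_sym N Q rho aa : symmetric N Q -> msym N (Pm rho aa Q).
Proof. intros H i j Hi Hj. unfold Pm. rewrite idm_sym, (H i j) by auto. auto. Qed.

Lemma idm_msym N : msym N idm.
Proof. intros i j _ _. apply idm_sym. Qed.

Lemma mtrace_ext N X Y : (forall i, (i < N)%nat -> X i i = Y i i) -> mtrace N X = mtrace N Y.
Proof. intros H. unfold mtrace. apply rsum_ext; auto. Qed.

Lemma Bf_pow_I N P a b : Bf N idm (mpow N P a) (mpow N P b) = mtrace N (mpow N P (a + b)).
Proof. unfold Bf. apply mtrace_ext. intros i Hi. rewrite mpow_add by auto. unfold mmul at 1 3.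
  apply rsum_ext; intros l Hl. f_equal. unfold mmul. apply (delta_l N (fun l0 => mpow N P b l0 i)); auto. Qed.

Lemma Bf_pow_P N P a b : Bf N P (mpow N P a) (mpow N P b) = mtrace N (mpow N P (a + S b)).
Proof. unfold Bf. apply mtrace_ext. intros i Hi. rewrite mpow_add by auto. unfold mmul at 1 3.
  apply rsum_ext; intros l Hl. f_equal. symmetry. apply mpow_Sl; auto. Qed.

Lemma psd_I N Z : msym N Z -> 0 <= Bf N idm Z Z.
Proof. intros HZ. rewrite Bf_diag by auto. apply rsum_nonneg; intros. rewrite qf_idm. apply nrm_nonneg. Qed.

Lemma psd_P N Q rho aa Z : stochastic N Q -> symmetric N Q -> 0 <= aa <= rho -> msym N Z ->
  0 <= Bf N (Pm rho aa Q) Z Z.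
Proof. intros H1 H2 Ha HZ. rewrite Bf_diag by auto. apply rsum_nonneg; intros. rewrite qf_P.
  pose proof (qf_Q_bound N Q (Z k) H1 H2). pose proof (nrm_nonneg N (Z k)). nra. Qed.

Lemma P_le_I N Q rho aa Z : stochastic N Q -> symmetric N Q -> 0 <= aa -> rho + aa = 1 -> msym N Z ->
  Bf N (Pm rho aa Q) Z Z <= Bf N idm Z Z.
Proof. intros H1 H2 Ha Hs HZ. rewrite !Bf_diag by auto. apply rsum_le; intros. rewrite qf_P, qf_idm.
  pose proof (qf_Q_bound N Q (Z k) H1 H2). pose proof (nrm_nonneg N (Z k)). nra. Qed.

Lemma Gt_0 N P : mtrace N (mpow N P 0) = INR N.
Proof. unfold mtrace. rewrite (rsum_ext _ _ (fun _ => 1)). rewrite rsum_const. ring.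
  intros. simpl. destruct (Nat.eq_dec k k); [auto|lia]. Qed.

Lemma Gt_pos N Q rho aa m : (0 < N)%nat -> stochastic N Q -> 0 < rho -> 0 <= aa ->
  0 < mtrace N (mpow N (Pm rho aa Q) m).
Proof. intros HN [Hpos _] Hr Ha.
  assert (Hnn : forall i j, (i < N)%nat -> (j < N)%nat -> 0 <= Pm rho aa Q i j).
  { intros. unfold Pm, idm. pose proof (Hpos i j H H0). apply Rplus_le_le_0_compat; apply Rmult_le_pos; destruct (Nat.eq_dec i j); lra. }
  assert (Hd : forall k i, (i < N)%nat -> rho ^ k <= mpow N (Pm rho aa Q) k i i).
  { induction k; intros i Hi. simpl. destruct (Nat.eq_dec i i); [lra|congruence].
    rewrite mpow_S. unfold mmul. eapply Rle_trans.
    2:{ apply (rsum_ge_term N (fun l => mpow N (Pm rho aa Q) k i l * Pm rho aa Q l i) i); auto.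
        intros. apply Rmult_le_pos. apply mpow_nonneg; auto. apply Hnn; auto. }
    simpl. assert (rho <= Pm rho aa Q i i). { unfold Pm, idm. destruct (Nat.eq_dec i i); [|lia].
       pose proof (Hpos i i Hi Hi). nra. }
    pose proof (IHk i Hi). pose proof (pow_lt rho k Hr). nra. }
  unfold mtrace. eapply Rlt_le_trans. 2:{ apply (rsum_ge_term N _ 0); auto.
    intros. apply mpow_nonneg; auto. }
  eapply Rlt_le_trans. apply (pow_lt rho m Hr). apply Hd. auto. Qed.

Definition Gt N Q rho aa m := mtrace N (mpow N (Pm rho aa Q) m).

Lemma Gt_LC N Q rho aa m : stochastic N Q -> symmetric N Q -> 0 <= aa <= rho ->
  Gt N Q rho aa (S m) * Gt N Q rho aa (S m) <= Gt N Q rho aa m * Gt N Q rho aa (S (S m)).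
Proof. intros H1 H2 Ha. unfold Gt. set (P := Pm rho aa Q).
  assert (HP : msym N P) by (apply P_sym; auto).
  destruct (Nat.Even_or_Odd m) as [[k Hk]|[k Hk]]; subst m.
  - pose proof (Bf_CS N idm (mpow N P k) (mpow N P (S k)) (idm_msym N) (psd_I N) (mpow_sym _ _ _ HP) (mpow_sym _ _ _ HP)).
    rewrite !Bf_pow_I in H.
    replace (k + S k)%nat with (S (2 * k)) in H by lia. replace (k + k)%nat with (2 * k)%nat in H by lia.
    replace (S k + S k)%nat with (S (S (2 * k))) in H by lia. auto.
  - pose proof (Bf_CS N P (mpow N P k) (mpow N P (S k)) HP (fun Z HZ => psd_P N Q rho aa Z H1 H2 Ha HZ) (mpow_sym _ _ _ HP) (mpow_sym _ _ _ HP)).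
    rewrite !Bf_pow_P in H.
    replace (k + S (S k))%nat with (S (2 * k + 1)) in H by lia. replace (k + S k)%nat with (2 * k + 1)%nat in H by lia.
    replace (S k + S (S k))%nat with (S (S (2 * k + 1))) in H by lia. auto. Qed.

Lemma Gt_MO N Q rho aa m : (0 < N)%nat -> stochastic N Q -> symmetric N Q -> 0 <= aa <= rho -> rho + aa = 1 -> 0 < rho ->
  Gt N Q rho aa (S m) <= Gt N Q rho aa m.
Proof. intros HN H1 H2 Ha Hs Hr.
  assert (HP : msym N (Pm rho aa Q)) by (apply P_sym; auto).
  assert (Hev : forall k, Gt N Q rho aa (S (2 * k)) <= Gt N Q rho aa (2 * k)).
  { intros k. unfold Gt. pose proof (P_le_I N Q rho aa (mpow N (Pm rho aa Q) k) H1 H2 ltac:(lra) Hs (mpow_sym _ _ _ HP)).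
    rewrite Bf_pow_P, Bf_pow_I in H. replace (k + S k)%nat with (S (2 * k)) in H by lia.
    replace (k + k)%nat with (2 * k)%nat in H by lia. auto. }
  destruct (Nat.Even_or_Odd m) as [[k Hk]|[k Hk]]; subst m. apply Hev.
  pose proof (Gt_LC N Q rho aa (2 * k + 1) H1 H2 Ha).
  pose proof (Hev (S k)). replace (S (2 * S k))%nat with (S (S (2 * k + 1))) in H0 by lia.
  replace (2 * S k)%nat with (S (2 * k + 1)) in H0 by lia.
  pose proof (Gt_pos N Q rho aa (S (S (2 * k + 1))) HN H1 Hr ltac:(lra)). fold (Gt N Q rho aa (S (S (2 * k + 1)))) in H3.
  pose proof (Gt_pos N Q rho aa (S (2 * k + 1)) HN H1 Hr ltac:(lra)). fold (Gt N Q rho aa (S (2 * k + 1))) in H4.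
  pose proof (Gt_pos N Q rho aa (2 * k + 1) HN H1 Hr ltac:(lra)). fold (Gt N Q rho aa (2 * k + 1)) in H5.
  nra. Qed.
Lemma ratio_mono (h : nat -> R) : (forall m, 0 < h m) -> (forall m, h (S m) * h (S m) <= h m * h (S (S m))) ->
  forall k m, (k <= m)%nat -> h (S k) * h m <= h (S m) * h k.
Proof. intros Hp Hl k m Hkm. induction Hkm. lra.
  pose proof (Hl m). pose proof (Hp m). pose proof (Hp (S m)). pose proof (Hp k). pose proof (Hp (S k)).
  assert (h (S k) * h (S m) * h (S m) <= h (S (S m)) * h k * h (S m)).
  { apply Rle_trans with (h (S k) * (h m * h (S (S m)))). nra.
    assert (0 <= h (S (S m))) by (left; apply Hp). nra. }
  nra. Qed.

Lemma antitone (h : nat -> R) : (forall m, h (S m) <= h m) -> forall a b, (a <= b)%nat -> h b <= h a.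
Proof. intros H a b Hab. induction Hab. lra. pose proof (H m). lra. Qed.

Lemma renewal (rho : R) (h u : nat -> R) : 0 <= rho -> h O = 1 -> (forall m, 0 < h m) ->
  (forall m, h (S m) * h (S m) <= h m * h (S (S m))) -> (forall m, h (S m) <= h m) ->
  (forall n, u n = 1 - rsum n (fun k => u k * (h (n - k)%nat - rho * h (n - 1 - k)%nat))) ->
  forall n, 0 <= u n.
Proof. intros Hr H0 Hp Hl Hm Hu.
  assert (Hu0 : u O = 1) by (rewrite Hu; simpl; lra).
  set (D := fun n => rsum (S n) (fun k => u k * h (n - k)%nat)).
  assert (HD : forall n, D (S n) = rho * D n + 1).
  { intros n. pose proof (Hu (S n)) as E.
    rewrite (rsum_ext _ _ (fun k => u k * h (S n - k)%nat - rho * (u k * h (n - k)%nat))) in E.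
    2:{ intros k Hk. replace (S n - 1 - k)%nat with (n - k)%nat by lia. ring. }
    rewrite rsum_minus, rsum_scal in E. unfold D. change (rsum (S (S n)) (fun k => u k * h (S n - k)%nat))
      with (rsum (S n) (fun k => u k * h (S n - k)%nat) + u (S n) * h (S n - S n)%nat).
    rewrite Nat.sub_diag, H0. lra. }
  assert (HD0 : D O = 1) by (unfold D; simpl; rewrite Hu0, H0; lra).
  set (r := fun n => match n with O => u O | S m => u (S m) - rho * u m end).
  set (E := fun n => rsum (S n) (fun k => r k * h (n - k)%nat)).
  assert (HE : forall n, E n = 1).
  { intros [|n]. unfold E; simpl; rewrite Hu0, H0; lra.
    unfold E. rewrite rsum_shift. simpl r.
    rewrite (rsum_ext _ _ (fun k => u (S k) * h (n - k)%nat - rho * (u k * h (n - k)%nat))) by (intros; simpl; ring).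
    rewrite rsum_minus, rsum_scal. pose proof (HD n). unfold D in H. rewrite rsum_shift in H.
    rewrite (rsum_ext _ (fun k => u (S k) * h (S n - S k)%nat) (fun k => u (S k) * h (n - k)%nat)) in H by (intros; reflexivity).
    rewrite Nat.sub_0_r in *. lra. }
  set (f := fun n => r n - r (S n)).
  assert (Hf : forall n, rsum (S n) (fun j => f j * h (n - j)%nat) = h (S n)).
  { intros n. unfold f. rewrite (rsum_ext _ _ (fun j => r j * h (n - j)%nat - r (S j) * h (n - j)%nat)) by (intros; ring).
    rewrite rsum_minus. pose proof (HE n). pose proof (HE (S n)). unfold E in H, H1.
    rewrite rsum_shift in H1.
    rewrite (rsum_ext _ (fun k => r (S k) * h (S n - S k)%nat) (fun k => r (S k) * h (n - k)%nat)) in H1 by (intros; reflexivity).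
    rewrite Nat.sub_0_r in H1. change (r O) with (u O) in H1. rewrite Hu0 in H1. lra. }
  assert (Hfpos : forall n j, (j <= n)%nat -> 0 <= f j).
  { induction n; intros j Hj.
    - assert (j = O) by lia. subst. pose proof (Hf O). simpl in H. rewrite H0 in H. pose proof (Hp 1%nat). lra.
    - destruct (Nat.eq_dec j (S n)); [|apply IHn; lia]. subst j.
      pose proof (Hf (S n)) as E1. pose proof (Hf n) as E2.
      change (rsum (S (S n)) (fun j => f j * h (S n - j)%nat)) with
        (rsum (S n) (fun j => f j * h (S n - j)%nat) + f (S n) * h (S n - S n)%nat) in E1.
      rewrite Nat.sub_diag, H0 in E1.
      assert (Hk : h (S n) * f (S n) = rsum (S n) (fun j => f j * (h (n - j)%nat * h (S (S n)) - h (S n - j)%nat * h (S n)))).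
      { rewrite (rsum_ext _ _ (fun j => f j * h (n - j)%nat * h (S (S n)) - f j * h (S n - j)%nat * h (S n))) by (intros; ring).
        rewrite rsum_minus, !rsum_scal_r, E2. nra. }
      assert (0 <= h (S n) * f (S n)).
      { rewrite Hk. apply rsum_nonneg. intros j Hj2. apply Rmult_le_pos. apply IHn; lia.
        replace (S n - j)%nat with (S (n - j)) by lia.
        pose proof (ratio_mono h Hp Hl (n - j)%nat (S n) ltac:(lia)). lra. }
      pose proof (Hp (S n)). nra. }
  assert (Hsum : forall n, rsum (S n) f <= 1).
  { intros n. pose proof (Hf n). assert (rsum (S n) (fun j => f j * h (S n)) <= h (S n)).
    { apply Rle_trans with (rsum (S n) (fun j => f j * h (n - j)%nat)); [|lra]. apply rsum_le. intros j Hj. apply Rmult_le_compat_l. apply (Hfpos n); lia.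
      apply antitone; auto; lia. }
    rewrite rsum_scal_r in H1. pose proof (Hp (S n)). nra. }
  assert (Hrt : forall n, r n = 1 - rsum n f).
  { induction n. simpl. change (r O) with (u O). lra. simpl rsum. unfold f at 2. lra. }
  assert (Hrpos : forall n, 0 <= r n).
  { intros [|n]. change (r O) with (u O); lra. rewrite Hrt. pose proof (Hsum n). lra. }
  induction n. lra. pose proof (Hrpos (S n)). simpl in H. nra. Qed.
Definition TT N Q s := mtrace N (mpow N Q s).
Definition Sn N Q n := rsum n (fun k => alpha N Q n (S k) * TT N Q (S k)).
Definition cc N Q n := 2 / INR N ^ 2 + 2 / INR N ^ 2 * Sn N Q n.
Definition rhoN N := (INR N - 2) / INR N.
Definition aaN N := 2 / INR N.

Lemma alpha_S0 N Q n : alpha N Q (S n) 0 = alpha N Q n 0 + cc N Q n.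
Proof. cbn -[INR rsum mtrace mpow]. unfold cc, Sn, TT. cbn -[INR rsum mtrace mpow]. ring. Qed.

Lemma alpha_S1 N Q n : alpha N Q (S n) 1 = rhoN N * alpha N Q n 1 - cc N Q n.
Proof. cbn -[INR rsum mtrace mpow]. unfold cc, Sn, TT, rhoN. cbn -[INR rsum mtrace mpow]. ring. Qed.

Lemma alpha_SS N Q n s : alpha N Q (S n) (S (S s)) = rhoN N * alpha N Q n (S (S s)) + aaN N * alpha N Q n (S s).
Proof. cbn -[INR rsum mtrace mpow]. unfold rhoN, aaN. ring. Qed.

Lemma alpha_zero N Q n : forall s, (n < s)%nat -> alpha N Q n s = 0.
Proof. induction n; intros s Hs. reflexivity.
  destruct s as [|[|s]]; try lia. rewrite alpha_SS, !IHn by lia. ring. Qed.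

Definition LL N Q n (w : nat -> R) := rsum n (fun k => alpha N Q n (S k) * w (S k)).

Lemma LL_step N Q n w : LL N Q (S n) w = rhoN N * LL N Q n w + aaN N * LL N Q n (fun s => w (S s)) - cc N Q n * w 1%nat.
Proof. unfold LL. rewrite rsum_shift. rewrite alpha_S1.
  rewrite (rsum_ext _ _ (fun k => rhoN N * (alpha N Q n (S (S k)) * w (S (S k))) + aaN N * (alpha N Q n (S k) * w (S (S k)))))
    by (intros; rewrite alpha_SS; ring).
  rewrite rsum_plus, !rsum_scal.
  assert (E : rsum n (fun k => alpha N Q n (S k) * w (S k)) = alpha N Q n 1%nat * w 1%nat + rsum n (fun k => alpha N Q n (S (S k)) * w (S (S k)))).
  { rewrite <- (rsum_shift n (fun k => alpha N Q n (S k) * w (S k))).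
    change (rsum (S n) (fun k => alpha N Q n (S k) * w (S k))) with
      (rsum n (fun k => alpha N Q n (S k) * w (S k)) + alpha N Q n (S n) * w (S n)).
    rewrite (alpha_zero N Q n (S n)) by lia. ring. }
  rewrite E. ring. Qed.

Lemma LL_formula N Q n : forall w, LL N Q n w = - rsum n (fun k => cc N Q k * Phi (rhoN N) (aaN N) (n - 1 - k) (fun s => w (S s))).
Proof. induction n; intros w. unfold LL; simpl; ring.
  rewrite LL_step, IHn, IHn. simpl rsum at 3.
  rewrite (rsum_ext _ (fun k => cc N Q k * Phi (rhoN N) (aaN N) (S n - 1 - k) (fun s => w (S s)))
     (fun k => rhoN N * (cc N Q k * Phi (rhoN N) (aaN N) (n - 1 - k) (fun s => w (S s)))
        + aaN N * (cc N Q k * Phi (rhoN N) (aaN N) (n - 1 - k) (fun s => w (S (S s)))))).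
  rewrite rsum_plus, !rsum_scal. replace (n - 0 - n)%nat with O by lia. cbn [Phi]. ring.
  intros k Hk. replace (S n - 1 - k)%nat with (S (n - 1 - k)) by lia. simpl Phi. ring. Qed.

Lemma TT_nonneg N Q s : stochastic N Q -> 0 <= TT N Q s.
Proof. intros [Hp _]. unfold TT, mtrace. apply rsum_nonneg; intros. apply mpow_nonneg; auto. Qed.

Lemma Phi_trace N Q rho aa m : Phi rho aa m (TT N Q) = mtrace N (mpow N (Pm rho aa Q) m).
Proof. unfold TT, mtrace.
  rewrite (Phi_lin rho aa m N (fun i s => mpow N Q s i i)). apply rsum_ext; intros i Hi.
  rewrite (Phi_ext _ _ _ _ (fun s => mmul N idm (mpow N Q s) i i)).
  rewrite Phi_mat by auto. unfold mmul. apply (delta_l N (fun l => mpow N (Pm rho aa Q) m l i)). auto.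
  intros s. unfold mmul. symmetry. apply (delta_l N (fun l => mpow N Q s l i)). auto. Qed.

Lemma u_bounds N Q : (8 < N)%nat -> stochastic N Q -> symmetric N Q ->
  forall n, 0 <= 1 + Sn N Q n <= 1.
Proof. intros HN Hst Hsy.
  assert (HNR : 8 < INR N) by (apply (lt_INR 8 N) in HN; simpl in HN; lra).
  set (rho := rhoN N). set (aa := aaN N).
  assert (Hra : rho + aa = 1) by (unfold rho, aa, rhoN, aaN; field; lra).
  assert (Ha0 : 0 <= aa) by (unfold aa, aaN; apply Rlt_le, Rdiv_lt_0_compat; lra).
  assert (Hrho : aa <= rho) by (unfold aa, rho, aaN, rhoN; apply Rmult_le_compat_r; [left; apply Rinv_0_lt_compat; lra| lra]).
  assert (Hrp : 0 < rho) by (unfold rho, rhoN; apply Rdiv_lt_0_compat; lra).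
  assert (HN0 : (0 < N)%nat) by lia.
  set (h := fun m => Phi rho aa m (TT N Q) / INR N).
  assert (Hh : forall m, h m = Gt N Q rho aa m / INR N) by (intros; unfold h, Gt; rewrite Phi_trace; auto).
  assert (Hcc : forall k, cc N Q k = aa / INR N * (1 + Sn N Q k)) by (intros; unfold cc, aa, aaN; field; lra).
  assert (Hrec : forall n, 1 + Sn N Q n = 1 - rsum n (fun k => cc N Q k * Phi rho aa (n - 1 - k) (fun s => TT N Q (S s)))).
  { intros n. unfold Sn. fold (LL N Q n (TT N Q)). rewrite LL_formula. fold rho aa. ring. }
  assert (Hpos : forall n, 0 <= 1 + Sn N Q n).
  { apply (renewal rho h). lra.
    - rewrite Hh. unfold Gt. rewrite Gt_0. field. lra.
    - intros m. rewrite Hh. apply Rdiv_lt_0_compat; [apply Gt_pos; auto; lra | lra].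
    - intros m. rewrite !Hh. pose proof (Gt_LC N Q rho aa m Hst Hsy ltac:(lra)).
      assert (0 < / INR N * / INR N) by (apply Rmult_lt_0_compat; apply Rinv_0_lt_compat; lra).
      unfold Rdiv. nra.
    - intros m. rewrite !Hh. unfold Rdiv. apply Rmult_le_compat_r. left; apply Rinv_0_lt_compat; lra.
      apply Gt_MO; auto; lra.
    - intros n. rewrite Hrec at 1. f_equal. apply rsum_ext. intros k Hk.
      rewrite Hcc. unfold h. replace (n - k)%nat with (S (n - 1 - k)) by lia. simpl Phi. field. lra. }
  intros n. split; auto. rewrite Hrec.
  assert (0 <= rsum n (fun k => cc N Q k * Phi rho aa (n - 1 - k) (fun s => TT N Q (S s)))); [|lra].
  apply rsum_nonneg. intros k Hk. apply Rmult_le_pos.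
  rewrite Hcc. apply Rmult_le_pos; auto. unfold Rdiv; apply Rmult_le_pos; [lra| left; apply Rinv_0_lt_compat; lra].
  apply Phi_nonneg; auto; try lra. intros; apply TT_nonneg; auto. Qed.
Lemma pow_le_one x k : 0 <= x <= 1 -> x ^ k <= 1.
Proof. intros H. induction k; simpl. lra. nra. Qed.

Lemma bernoulli y k : 0 <= y -> 1 + INR k * y <= (1 + y) ^ k.
Proof. intros Hy. induction k. simpl. lra. rewrite S_INR. simpl.
  assert (0 <= INR k) by apply pos_INR. nra. Qed.

Lemma final_bound NR eps K n k : 1 <= NR -> 0 < eps <= 1 -> eps < NR -> 4 <= K -> 2 <= K * eps -> (n <= k + 2)%nat ->
  INR n * (2 / NR ^ 2) <= K * / NR * (NR / (NR - eps)) ^ k.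
Proof. intros HNR He HeN HK HKe Hnk.
  assert (Hx : 1 + eps / NR <= NR / (NR - eps)).
  { apply Rle_trans with (1 + eps / (NR - eps)).
    assert (eps / NR <= eps / (NR - eps)). { unfold Rdiv. apply Rmult_le_compat_l. lra. apply Rinv_le_contravar; lra. } lra.
    right. field. lra. }
  assert (Hg : 1 + INR k * (eps / NR) <= (NR / (NR - eps)) ^ k).
  { apply Rle_trans with ((1 + eps / NR) ^ k). apply bernoulli. unfold Rdiv. apply Rmult_le_pos; [lra|left; apply Rinv_0_lt_compat; lra].
    apply pow_incr. split; [|auto]. assert (0 <= eps / NR) by (unfold Rdiv; apply Rmult_le_pos; [lra|left; apply Rinv_0_lt_compat; lra]). lra. }
  assert (Hn : INR n <= INR k + 2). { apply le_INR in Hnk. rewrite plus_INR in Hnk. simpl in Hnk. lra. }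
  assert (Hk0 : 0 <= INR k) by apply pos_INR.
  assert (HiN : 0 < / NR) by (apply Rinv_0_lt_compat; lra).
  apply Rle_trans with (K * / NR * (1 + INR k * (eps / NR))).
  2:{ apply Rmult_le_compat_l; auto. apply Rmult_le_pos; lra. }
  replace (INR n * (2 / NR ^ 2)) with (INR n * 2 * (/ NR * / NR)) by (field; lra).
  replace (K * / NR * (1 + INR k * (eps / NR))) with (K * NR * (/ NR * / NR) + INR k * (K * eps) * (/ NR * / NR)) by (field; lra).
  assert (0 < / NR * / NR) by nra.
  assert (4 <= K * NR) by nra.
  assert (INR n * 2 <= K * NR + INR k * (K * eps)) by nra.
  nra. Qed.

Lemma cc_bounds N Q n : (8 < N)%nat -> stochastic N Q -> symmetric N Q -> 0 <= cc N Q n <= 2 / INR N ^ 2.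
Proof. intros HN H1 H2. pose proof (u_bounds N Q HN H1 H2 n).
  assert (HNR : 8 < INR N) by (apply (lt_INR 8 N) in HN; simpl in HN; lra).
  assert (0 < 2 / INR N ^ 2) by (apply Rdiv_lt_0_compat; [lra| apply pow_lt; lra]).
  unfold cc. replace (2 / INR N ^ 2 + 2 / INR N ^ 2 * Sn N Q n) with (2 / INR N ^ 2 * (1 + Sn N Q n)) by ring.
  nra. Qed.

Lemma alpha0_eq N Q n : alpha N Q n 0 = rsum n (cc N Q).
Proof. induction n. reflexivity. rewrite alpha_S0, IHn. reflexivity. Qed.

Definition AA N Q n := rsum n (fun k => Rabs (alpha N Q n (S k))).

Lemma AA_split N Q n : AA N Q n = Rabs (alpha N Q n 1%nat) + rsum n (fun k => Rabs (alpha N Q n (S (S k)))).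
Proof. unfold AA. rewrite <- (rsum_shift n (fun k => Rabs (alpha N Q n (S k)))).
  change (rsum (S n) (fun k => Rabs (alpha N Q n (S k)))) with
      (rsum n (fun k => Rabs (alpha N Q n (S k))) + Rabs (alpha N Q n (S n))).
  rewrite (alpha_zero N Q n (S n)) by lia. rewrite Rabs_R0. ring. Qed.

Lemma AA_bound N Q n : (8 < N)%nat -> stochastic N Q -> symmetric N Q -> AA N Q n <= rsum n (cc N Q).
Proof. intros HN H1 H2.
  assert (HNR : 8 < INR N) by (apply (lt_INR 8 N) in HN; simpl in HN; lra).
  assert (Hr : 0 <= rhoN N) by (unfold rhoN; apply Rlt_le, Rdiv_lt_0_compat; lra).
  assert (Ha : 0 <= aaN N) by (unfold aaN; apply Rlt_le, Rdiv_lt_0_compat; lra).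
  assert (Hs : rhoN N + aaN N = 1) by (unfold rhoN, aaN; field; lra).
  induction n. unfold AA. simpl. lra.
  pose proof (cc_bounds N Q n HN H1 H2).
  unfold AA at 1. rewrite rsum_shift. simpl rsum at 2.
  rewrite alpha_S1.
  assert (E1 : Rabs (rhoN N * alpha N Q n 1%nat - cc N Q n) <= rhoN N * Rabs (alpha N Q n 1%nat) + cc N Q n).
  { unfold Rminus. eapply Rle_trans. apply Rabs_triang. rewrite Rabs_Ropp, Rabs_mult, (Rabs_pos_eq (rhoN N)), (Rabs_pos_eq (cc N Q n)) by lra. lra. }
  assert (E2 : rsum n (fun k => Rabs (alpha N Q (S n) (S (S k)))) <= rhoN N * rsum n (fun k => Rabs (alpha N Q n (S (S k)))) + aaN N * AA N Q n).
  { unfold AA. rewrite <- !rsum_scal, <- rsum_plus. apply rsum_le. intros k Hk. rewrite alpha_SS.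
    eapply Rle_trans. apply Rabs_triang. rewrite !Rabs_mult, (Rabs_pos_eq (rhoN N)), (Rabs_pos_eq (aaN N)) by lra. lra. }
  pose proof (AA_split N Q n). nra. Qed.

Lemma tail_bound N Q n q : -1 <= q <= 1 -> Rabs (alpha_tail N Q n q) <= AA N Q n.
Proof. intros Hq. unfold alpha_tail. destruct n as [|m].
  - simpl. rewrite Rabs_R0. unfold AA. simpl. lra.
  - replace (S m - 1)%nat with m by lia. rewrite AA_split.
    eapply Rle_trans. apply rsum_abs. cbv beta.
    assert (0 <= Rabs (alpha N Q (S m) 1%nat)) by apply Rabs_pos.
    assert (rsum m (fun k => Rabs (alpha N Q (S m) (S (S k)))) <= rsum (S m) (fun k => Rabs (alpha N Q (S m) (S (S k))))).
    { cbn [rsum]. pose proof (Rabs_pos (alpha N Q (S m) (S (S m)))). lra. }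
    assert (rsum m (fun k => Rabs (q ^ (k + 2) * alpha N Q (S m) (k + 2)%nat)) <= rsum m (fun k => Rabs (alpha N Q (S m) (S (S k))))); [|lra].
    apply rsum_le. intros k Hk. replace (k + 2)%nat with (S (S k)) by lia. rewrite Rabs_mult, <- RPow_abs.
    assert (Rabs q ^ S (S k) <= 1) by (apply pow_le_one; split; [apply Rabs_pos| apply Rabs_le; lra]).
    assert (0 <= Rabs q ^ S (S k)) by (apply pow_le; apply Rabs_pos).
    pose proof (Rabs_pos (alpha N Q (S m) (S (S k)))). nra. Qed.

Lemma alpha1_bound N Q n : (8 < N)%nat -> stochastic N Q -> symmetric N Q -> - / INR N <= alpha N Q n 1%nat <= 0.
Proof. intros HN H1 H2.
  assert (HNR : 8 < INR N) by (apply (lt_INR 8 N) in HN; simpl in HN; lra).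
  induction n. simpl. split; [|lra]. assert (0 < / INR N) by (apply Rinv_0_lt_compat; lra). lra.
  rewrite alpha_S1. pose proof (cc_bounds N Q n HN H1 H2).
  assert (Hr : 0 <= rhoN N) by (unfold rhoN; apply Rlt_le, Rdiv_lt_0_compat; lra).
  assert (E : - / INR N = rhoN N * (- / INR N) - 2 / INR N ^ 2) by (unfold rhoN; field; lra).
  split; nra. Qed.
Lemma K_bounds (P Y eps : R) : 1/4 <= P -> 0 < eps <= 1 -> Y = (4 + eps) / eps -> forall A, 5 <= A ->
  4 <= P * A * Y /\ 2 <= P * A * Y * eps.
Proof. intros HP He HY A HA.
  assert (HYe : Y * eps = 4 + eps) by (rewrite HY; field; lra).
  assert (HY5 : 5 <= Y). { rewrite HY. unfold Rdiv. rewrite Rmult_plus_distr_r, Rinv_r by lra.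
    assert (1 <= / eps). { replace 1 with (/ 1) by apply Rinv_1. apply Rinv_le_contravar; lra. } lra. }
  assert (5/4 <= P * A) by nra.
  split. nra. replace (P * A * Y * eps) with (P * A * (Y * eps)) by ring. rewrite HYe. nra. Qed.

Theorem lemma4p5 (N : nat) (Q : nat -> nat -> R)
  (HN : (8 < N)%nat)
  (Hstoch : stochastic N Q)
  (Hsym : symmetric N Q)
  (Hirr : irreducible N Q)
  (Htr : mtrace N Q = 0)
  (eps : R) (n : nat)
  (Heps : 0 < eps <= 1) :
  Rabs (alpha N Q n 0) <=
    (/ eps + 4 * sqrt 2) / PI * ((4 + eps) / eps) * / INR N
      * (INR N / (INR N - eps)) ^ (n - 1)
  /\
  Rabs (alpha N Q n 1) <=
    9 / PI * ((4 + eps) / eps) * / INR N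
      * (INR N / (INR N - eps)) ^ (n - 1)
  /\
  (forall q : R, -1 <= q <= 1 ->
    Rabs (alpha_tail N Q n q) <=
      / PI * (/ eps + 16 * sqrt 2 / sqrt (1 - cos 1)) * ((4 + eps) / eps)
        * / INR N * (INR N / (INR N - eps)) ^ (n - 2)).
Proof.
  assert (HNR : 8 < INR N) by (apply (lt_INR 8 N) in HN; simpl in HN; lra).
  assert (Hpi : 1/4 <= / PI).
  { replace (1/4) with (/ 4) by field. apply Rinv_le_contravar. apply PI_RGT_0. apply PI_4. }
  assert (Hpi0 : 0 < / PI) by (apply Rinv_0_lt_compat, PI_RGT_0).
  assert (Hie : 1 <= / eps). { replace 1 with (/ 1) by apply Rinv_1. apply Rinv_le_contravar; lra. }
  assert (Hs2 : 1 <= sqrt 2). { rewrite <- sqrt_1. apply sqrt_le_1_alt. lra. }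
  assert (Hsum : rsum n (cc N Q) <= INR n * (2 / INR N ^ 2)).
  { rewrite <- rsum_const. apply rsum_le. intros. apply cc_bounds; auto. }
  assert (Hsum0 : 0 <= rsum n (cc N Q)). { apply rsum_nonneg. intros. apply cc_bounds; auto. }
  split; [|split].
  - rewrite alpha0_eq, Rabs_pos_eq by auto.
    destruct (K_bounds (/ PI) ((4 + eps) / eps) eps Hpi Heps eq_refl (/ eps + 4 * sqrt 2) ltac:(lra)) as [K1 K2].
    eapply Rle_trans. apply Hsum.
    replace ((/ eps + 4 * sqrt 2) / PI * ((4 + eps) / eps)) with (/ PI * (/ eps + 4 * sqrt 2) * ((4 + eps) / eps)) by (unfold Rdiv; ring).
    apply final_bound; [lra|lra|lra|lra|lra|lia].
  - pose proof (alpha1_bound N Q n HN Hstoch Hsym).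
    rewrite Rabs_left1 by lra.
    destruct (K_bounds (/ PI) ((4 + eps) / eps) eps Hpi Heps eq_refl 9 ltac:(lra)) as [K1 K2].
    assert (Hg : 1 <= (INR N / (INR N - eps)) ^ (n - 1)).
    { apply pow_R1_Rle. apply Rle_trans with (INR N / INR N). right; field; lra.
      unfold Rdiv. apply Rmult_le_compat_l. lra. apply Rinv_le_contravar; lra. }
    assert (HiN : 0 < / INR N) by (apply Rinv_0_lt_compat; lra).
    replace (9 / PI * ((4 + eps) / eps)) with (/ PI * 9 * ((4 + eps) / eps)) by (unfold Rdiv; ring).
    set (K := / PI * 9 * ((4 + eps) / eps)) in *. set (g := (INR N / (INR N - eps)) ^ (n - 1)) in *.
    assert (/ INR N <= K * / INR N) by nra.
    assert (K * / INR N <= K * / INR N * g) by nra. lra.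
  - intros q Hq.
    assert (Hc : 0 < 1 - cos 1).
    { replace 1 with (2 * (1/2)) at 2 by field. rewrite cos_2a_sin.
      assert (0 < sin (1/2)) by (apply sin_gt_0; pose proof PI2_1; lra). nra. }
    assert (Hsc : 0 < sqrt (1 - cos 1) <= sqrt 2).
    { split. apply sqrt_lt_R0; auto. apply sqrt_le_1_alt. pose proof (COS_bound 1). lra. }
    assert (HZ : 16 <= 16 * sqrt 2 / sqrt (1 - cos 1)).
    { apply Rmult_le_reg_r with (sqrt (1 - cos 1)). lra. unfold Rdiv. rewrite Rmult_assoc, Rinv_l by lra. nra. }
    destruct (K_bounds (/ PI) ((4 + eps) / eps) eps Hpi Heps eq_refl (/ eps + 16 * sqrt 2 / sqrt (1 - cos 1)) ltac:(lra)) as [K1 K2].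
    eapply Rle_trans. apply tail_bound; auto.
    eapply Rle_trans. apply AA_bound; auto.
    eapply Rle_trans. apply Hsum.
    apply final_bound; [lra|lra|lra|lra|lra|lia].
Qed.
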